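(* Let $N\ge1$, $T>0$, and consider minimizing $\int_0^T\mathbb V(t)\,dt$ with $\mathbb V=\frac1N\sum_i\xi_i^2$ over $\alpha\in\mathcal U$, where $\dot\xi_i=-\xi_i+(1-\alpha_i)\bar\xi$, $\bar\xi=\frac1N\sum_j\xi_j$, with $\bar\xi(0)>0$ and $\xi_1(0)\ge\dots\ge\xi_N(0)$. Let $\alpha$ be an optimal control whose trajectory satisfies $\xi_i(t)\ge\xi_j(t)$ for all $t\in[0,T]$ and all $i<j$, and let $\lambda$ be a (normal) covector associated with it by the Pontryagin maximum principle, i.e. $\dot\lambda_i=\lambda_i-\frac1N\sum_j(1-\alpha_j)\lambda_j-2\xi_i$ for $i=1,\dots,N$, with $\lambda(T)=0$. Then for all $t\in[0,T]$ and all $i<j$, $\lambda_i(t)\ge\lambda_j(t)$.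
   Context: $\mathcal U$ is the set of measurable $\alpha:[0,T]\to[0,1]^N$ with $\sum_i\alpha_i(t)\le1$ for all $t$. The covector equation comes from the Hamiltonian $H=-\sum_i\lambda_i\xi_i+\bar\xi\sum_i(1-\alpha_i)\lambda_i+\sum_i\xi_i^2$. *)

(* Defs.v *)
From HB Require Import structures.
From mathcomp Require Import all_boot all_order all_algebra.
From mathcomp Require Import all_classical all_reals all_analysis.
Set Implicit Arguments. Unset Strict Implicit. Unset Printing Implicit Defensive.
Import Order.TTheory GRing.Theory Num.Theory.
Import numFieldNormedType.Exports.
Local Open Scope classical_set_scope.
Local Open Scope ring_scope.

Section Defs.
Variables (R : realType) (N : nat).

Definition Rint (D : set R) (f : R -> R) : R :=
  Rintegral (@lebesgue_measure R) D f.

Definition xbar (xi : R -> 'I_N -> R) (t : R) : R :=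
  N%:R^-1 * \sum_(j < N) xi t j.

Definition admissible (T : R) (alpha : R -> 'I_N -> R) : Prop :=
  (forall i, measurable_fun `[0, T] (fun t => alpha t i)) /\
  (forall t, t \in `[0, T] ->
     (forall i, 0 <= alpha t i <= 1) /\ \sum_(i < N) alpha t i <= 1).

Definition trajectory (T : R) (alpha xi : R -> 'I_N -> R) : Prop :=
  (forall i, {within `[0, T], continuous (fun t => xi t i)}) /\
  (forall i t, t \in `[0, T] ->
     xi t i = xi 0 i +
       Rint `[0, t] (fun s => - xi s i + (1 - alpha s i) * xbar xi s)).

Definition cost (T : R) (xi : R -> 'I_N -> R) : R :=
  Rint `[0, T] (fun t => N%:R^-1 * \sum_(i < N) xi t i ^+ 2).

Definition optimal (T : R) (alpha xi : R -> 'I_N -> R) : Prop :=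
  forall alpha' xi', admissible T alpha' -> trajectory T alpha' xi' ->
    (forall i, xi' 0 i = xi 0 i) -> cost T xi <= cost T xi'.

Definition costate (T : R) (alpha xi lam : R -> 'I_N -> R) : Prop :=
  (forall i, {within `[0, T], continuous (fun t => lam t i)}) /\
  (forall i, lam T i = 0) /\
  (forall i t, t \in `[0, T] ->
     lam t i = lam T i -
       Rint `[t, T] (fun s => lam s i
          - N%:R^-1 * \sum_(j < N) (1 - alpha s j) * lam s j
          - 2 * xi s i)).

End Defs.

(* Main.v *)
Require Import Defs.
From HB Require Import structures.
From mathcomp Require Import all_boot all_order all_algebra.
From mathcomp Require Import all_classical all_reals all_analysis.
From mathcomp Require Import measurable_realfun.
From mathcomp Require Import ring lra.
Import Order.TTheory GRing.Theory Num.Theory.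
Import numFieldNormedType.Exports.
Local Open Scope classical_set_scope.
Local Open Scope ring_scope.

Lemma int_cont {R : realType} {T : R} {f : R -> R} :
  {within `[0, T], continuous f} ->
  (@lebesgue_measure R).-integrable `[0, T] (EFin \o f).
Proof.
move=> cf; apply: continuous_compact_integrable => //.
exact: segment_compact.
Qed.

Lemma int_F (R : realType) (N : nat) (T : R) (alpha xi lam : R -> 'I_N -> R) k :
  admissible T alpha -> trajectory T alpha xi -> costate T alpha xi lam ->
  (@lebesgue_measure R).-integrable `[0, T] (EFin \o (fun s => lam s k
          - N%:R^-1 * \sum_(j < N) (1 - alpha s j) * lam s j
          - 2 * xi s k)).
Proof.
move=> [ma ba] [cx _] [cl _].
have ij : forall j, (@lebesgue_measure R).-integrable `[0, T]
   (fun s => ((1 - alpha s j) * lam s j)%:E).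
  move=> j.
  have := @integrableMl _ _ _ (@lebesgue_measure R) `[0, T] (measurable_itv _)
    (EFin \o (fun s => lam s j)) (fun s => 1 - alpha s j) (int_cont (cl j)).
  have mh : measurable_fun `[0, T] (fun s => 1 - alpha s j).
    by apply: measurable_funB => //.
  have bh : [bounded (1 - alpha x j) | x in `[0, T]].
    exists 1; split; rewrite ?num_real // => M M1 x xI /=.
    have [/(_ j) /andP[a0 a1] _] := ba x xI.
    rewrite ler_norml; apply/andP; split; lra.
  move=> /(_ mh bh); apply: eq_integrable => // x _ /=.
  by rewrite mulrC.
have isum := @integrable_sum _ _ _ (@lebesgue_measure R) `[0, T] (measurable_itv _)
  'I_N (index_enum 'I_N) predT _ (fun j _ => ij j).
have mI : measurable (`[0, T] : set R) := measurable_itv _.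
have := @integrableZl _ _ _ (@lebesgue_measure R) _ mI (N%:R^-1) _ isum.
move=> /(@integrableB _ _ _ (@lebesgue_measure R) _ mI _ _ (int_cont (cl k))).
move=> /(fun h => @integrableB _ _ _ (@lebesgue_measure R) _ mI _ _ h
  (@integrableZl _ _ _ (@lebesgue_measure R) _ mI 2 _ (int_cont (cx k)))).
apply: eq_integrable => // x _ /=.
by rewrite sumEFin -EFinM -EFinB.
Qed.

Lemma cont_eps {R : realType} (f : R -> R) (A : set R) x :
  {within A, continuous f} -> A x -> forall eps, 0 < eps ->
  exists2 d, 0 < d & forall y, A y -> `|x - y| < d -> `|f x - f y| < eps.
Proof.
move=> /subspace_continuousP cf Ax eps e0.
have /cvgrPdist_lt/(_ eps e0) := cf x Ax.
rewrite /within /= => /nbhs_normP [d /= d0 H].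
exists d => // y Ay xy; apply: H => //.
Qed.

Lemma cont_eps2 {R : realType} (f g : R -> R) (A : set R) x :
  {within A, continuous f} -> {within A, continuous g} -> A x ->
  forall eps, 0 < eps ->
  exists2 d, 0 < d & forall y, A y -> `|x - y| < d ->
    `|(f x - g x) - (f y - g y)| < eps.
Proof.
move=> cf cg Ax eps e0.
have e2 : 0 < eps / 2 by lra.
have [d1 d10 H1] := cont_eps _ _ _ cf Ax _ e2.
have [d2 d20 H2] := cont_eps _ _ _ cg Ax _ e2.
exists (Num.min d1 d2); first by rewrite lt_min d10 d20.
move=> y Ay; rewrite lt_min => /andP[y1 y2].
have := H1 y Ay y1; have := H2 y Ay y2.
rewrite !ltr_norml => /andP[a1 a2] /andP[b1 b2].
apply/andP; split; lra.
Qed.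

Theorem proposition8 (R : realType) (N : nat) (T : R)
    (alpha xi lam : R -> 'I_N -> R) :
  (1 <= N)%N -> 0 < T ->
  0 < xbar xi 0 ->
  (forall i j : 'I_N, (i < j)%N -> xi 0 j <= xi 0 i) ->
  admissible T alpha -> trajectory T alpha xi -> optimal T alpha xi ->
  (forall t, t \in `[0, T] ->
     forall i j : 'I_N, (i < j)%N -> xi t j <= xi t i) ->
  costate T alpha xi lam ->
  forall t, t \in `[0, T] ->
    forall i j : 'I_N, (i < j)%N -> lam t j <= lam t i.
Proof.
move=> _ T0 _ _ adm traj _ xord cst t0 t0I i j ij.
have [cl [lT leq]] := cst.
have mI : measurable (`[0, T] : set R) := measurable_itv _.
pose F k s := lam s k - N%:R^-1 * \sum_(j < N) (1 - alpha s j) * lam s j - 2 * xi s k.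
have iF : forall k, (@lebesgue_measure R).-integrable `[0, T] (EFin \o F k).
  by move=> k; exact: int_F.
pose mu s := lam s i - lam s j.
pose G s := 2 * (xi s i - xi s j) - mu s.
have iG : (@lebesgue_measure R).-integrable `[0, T] (EFin \o G).
  have := @integrableB _ _ _ (@lebesgue_measure R) _ mI _ _ (iF j) (iF i).
  apply: eq_integrable => // x _ /=.
  rewrite -EFinB; congr EFin; rewrite /F /G /mu; ring.
have sub : forall a b, 0 <= a -> b <= T -> `[a, b] `<=` (`[0, T] : set R).
  move=> a b a0 bT s /=; rewrite !in_itv /= => /andP[h1 h2].
  apply/andP; split; [exact: le_trans h1 | exact: le_trans bT].
have E : forall t, t \in `[0, T] -> mu t = Defs.Rint `[t, T] G.
  move=> t tI.
  have := tI; rewrite in_itv /= => /andP[t0' tT].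
  have iS : forall k, (@lebesgue_measure R).-integrable `[t, T] (EFin \o F k).
    move=> k; apply: (@integrableS _ _ _ (@lebesgue_measure R) _ _ _ mI (measurable_itv _) _ (iF k)).
    exact: sub.
  rewrite /mu (leq i t tI) (leq j t tI) !lT /Defs.Rint.
  transitivity (Rintegral lebesgue_measure `[t, T] (F j) -
                Rintegral lebesgue_measure `[t, T] (F i)); first by rewrite /F; ring.
  rewrite -RintegralB //; last 2 first.
  - exact: iS.
  - exact: iS.
  congr fine; apply: eq_integral => s _ /=; congr EFin; rewrite /G /mu; ring.
have S : forall a b, 0 <= a -> a <= b -> b <= T ->
    Defs.Rint `[a, T] G - Defs.Rint `[b, T] G = Defs.Rint `[a, b] G.
  move=> a b a0 ab bT.
  have iGa : (@lebesgue_measure R).-integrable `[a, T] (EFin \o G).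
    apply: (@integrableS _ _ _ (@lebesgue_measure R) _ _ _ mI (measurable_itv _) _ iG).
    exact: sub.
  have iGb : (@lebesgue_measure R).-integrable `]b, T] (EFin \o G).
    apply: (@integrableS _ _ _ (@lebesgue_measure R) _ _ _ mI (measurable_itv _) _ iG).
    move=> s /=; rewrite !in_itv /= => /andP[h1 h2].
    apply/andP; split; last exact: h2.
    exact: (le_trans a0 (le_trans ab (ltW h1))).
  have h := @Rintegral_itvB R G (BLeft a) (BRight T) b iGa.
  have := h ltac:(by rewrite bnd_simp) ltac:(by rewrite bnd_simp).
  rewrite Rintegral_itv_obnd_cbnd // /Defs.Rint => <-.
  ring.
have cmu : forall x, x \in `[0, T] -> forall eps, 0 < eps ->
    exists2 d, 0 < d & forall y, y \in `[0, T] -> `|x - y| < d ->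
      `|mu x - mu y| < eps.
  move=> x xI eps e0.
  have [d d0 H] := cont_eps2 _ _ _ _ (cl i) (cl j) xI _ e0.
  by exists d => // y yI xy; exact: H.
rewrite leNgt; apply/negP => neg0.
have m0 : mu t0 < 0 by rewrite /mu subr_lt0.
have := t0I; rewrite in_itv /= => /andP[t00 t0T].
pose A := [set s | t0 <= s <= T /\ 0 <= mu s].
have muT : mu T = 0 by rewrite /mu !lT subrr.
have TA : A T by split; [rewrite t0T lexx | rewrite muT].
have lbA : has_lbound A by exists t0 => s [/andP[]].
pose t1 := inf A.
have t01 : t0 <= t1 by apply: lb_le_inf; [exists T | move=> s [/andP[]]].
have t1T : t1 <= T by apply: ge_inf.
have negb : forall s, t0 <= s -> s < t1 -> mu s < 0.
  move=> s h1 h2; rewrite ltNge; apply/negP => h3.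
  have : t1 <= s.
    apply: ge_inf => //; split => //.
    by rewrite h1 /= (le_trans (ltW h2) t1T).
  by rewrite leNgt h2.
have t1I : t1 \in `[0, T] by rewrite in_itv /= (le_trans t00 t01) t1T.
have mu1le : mu t1 <= 0.
  rewrite leNgt; apply/negP => pos.
  have [e01|ne01] := eqVneq t1 t0; first by move: pos; rewrite e01; lra.
  have lt01 : t0 < t1 by rewrite lt_neqAle eq_sym ne01 t01.
  have [d d0 H] := cmu t1 t1I _ pos.
  pose m := Num.min d (t1 - t0).
  have md : m <= d by rewrite ge_min lexx.
  have mt : m <= t1 - t0 by rewrite ge_min lexx orbT.
  have mp : 0 < m by rewrite lt_min d0 subr_gt0 lt01.
  pose y := t1 - m / 2.
  have yI : y \in `[0, T].
    rewrite in_itv /=; apply/andP; split; rewrite /y; lra.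
  have := H y yI.
  have -> : t1 - y = m / 2 by rewrite /y; ring.
  rewrite ger0_norm; last lra.
  move=> /(_ ltac:(lra)); rewrite ltr_norml => /andP[h1 h2].
  have := negb y ltac:(rewrite /y; lra) ltac:(rewrite /y; lra).
  lra.
have mu1ge : 0 <= mu t1.
  rewrite leNgt; apply/negP => negt.
  have t1T' : t1 < T.
    rewrite lt_neqAle t1T andbT; apply/eqP => e.
    by move: negt; rewrite e muT ltxx.
  have [d d0 H] := cmu t1 t1I (- mu t1) ltac:(lra).
  pose m := Num.min d (T - t1).
  have md : m <= d by rewrite ge_min lexx.
  have mt : m <= T - t1 by rewrite ge_min lexx orbT.
  have mp : 0 < m by rewrite lt_min d0 subr_gt0 t1T'.
  suff : t1 + m / 2 <= t1 by lra.
  apply: lb_le_inf; first by exists T.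
  move=> s [/andP[s0 sT] ms]; rewrite leNgt; apply/negP => slt.
  have t1s : t1 <= s by apply: ge_inf => //; split => //; rewrite s0 sT.
  have sI : s \in `[0, T] by rewrite in_itv /= sT andbT (le_trans t00 s0).
  have := H s sI.
  rewrite distrC ger0_norm ?subr_ge0 //.
  move=> /(_ ltac:(lra)); rewrite ltr_norml => /andP[h1 h2].
  lra.
have := S t0 t1 t00 t01 t1T.
rewrite -(E t0 t0I) -(E t1 t1I).
have : 0 <= Defs.Rint `[t0, t1] G.
  rewrite /Defs.Rint; apply: Rintegral_ge0 => s /=; rewrite in_itv /= => /andP[s0 s1].
  have sI : s \in `[0, T].
    by rewrite in_itv /= (le_trans t00 s0) (le_trans s1 t1T).
  have := xord s sI i j ij.
  have : mu s <= 0.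
    have [e1|ne1] := eqVneq s t1; first by rewrite e1.
    apply: ltW; apply: negb => //; by rewrite lt_neqAle ne1 s1.
  rewrite /G; lra.
lra.
Qed.
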